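(* Let $\mathcal S$ be a collection of nonempty subsets of a set $X$ with a basis $\mathcal B\subseteq\mathcal S$. Then for every $A\in\mathcal B$, $[A]_{\mathcal S}\subseteq\mathcal B$.
   Context: Fix a nonempty set $X$; $A^c:=X\setminus A$. $A\perp B$ means $A\cap B=\emptyset$ and $A\ne B^c$. $A$ dominates $B$ if $A\supseteq B$ or $A\supseteq B^c$. A collection is orthogonal if any two distinct members are orthogonal. A basis for $\mathcal S$ is an orthogonal $\mathcal B\subseteq\mathcal S$ such that every member of $\mathcal S$ is dominated by some member of $\mathcal B$. For $A,B\in\mathcal S$, $B$ is $\mathcal S$-maximally orthogonal to $A$ if $B\perp A$ and no $C\in\mathcal S$ satisfies $C\perp A$, $C\supsetneq B$; $[A]_{\mathcal S}:=\{A\}\cup\{B\in\mathcal S:B$ is $\mathcal S$-maximally orthogonal to $A\}$. *)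

(* Defs.v *)
Definition set (X : Type) := X -> Prop.

Definition seteq {X : Type} (A B : set X) : Prop := forall x, A x <-> B x.
Definition subset {X : Type} (A B : set X) : Prop := forall x, A x -> B x.
Definition psubset {X : Type} (A B : set X) : Prop := subset A B /\ ~ seteq A B.
Definition compl {X : Type} (A : set X) : set X := fun x => ~ A x.
Definition nonempty {X : Type} (A : set X) : Prop := exists x, A x.

Definition orth {X : Type} (A B : set X) : Prop :=
  (forall x, ~ (A x /\ B x)) /\ ~ seteq A (compl B).

Definition dominates {X : Type} (A B : set X) : Prop :=
  subset B A \/ subset (compl B) A.

Definition orthogonal {X : Type} (C : set X -> Prop) : Prop :=
  forall A B, C A -> C B -> ~ seteq A B -> orth A B.

Definition is_basis {X : Type} (S B : set X -> Prop) : Prop :=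
  (forall A, B A -> S A) /\ orthogonal B /\
  (forall C, S C -> exists D, B D /\ dominates D C).

Definition max_orth {X : Type} (S : set X -> Prop) (A B : set X) : Prop :=
  orth B A /\ ~ (exists C, S C /\ orth C A /\ psubset B C).

(* [A]_S = {A} ∪ {B ∈ S : B S-maximally orthogonal to A} *)
Definition orth_class {X : Type} (S : set X -> Prop) (A : set X) : set X -> Prop :=
  fun B => B = A \/ (S B /\ max_orth S A B).

Definition mem_ext {X : Type} (C : set X -> Prop) (A : set X) : Prop :=
  exists A', C A' /\ seteq A A'.

(* Main.v *)
Require Import Defs.
From Stdlib Require Import Classical.

Theorem mainTheorem12 (X : Type) (x0 : X) (S B : set X -> Prop)
  (hne : forall A, S A -> nonempty A)
  (hB : is_basis S B) :
  forall A, B A -> forall C, orth_class S A C -> mem_ext B C.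
Proof.
  destruct hB as [hBS [hOrth hDom]].
  intros A hA C [-> | [hSC [[hCA1 hCA2] hmax]]].
  - exists A; split; [exact hA | intro; tauto].
  - destruct (hDom C hSC) as [D [hD hdom]].
    destruct (classic (seteq D A)) as [hDA | hDA].
    + exfalso. destruct hdom as [hsub | hsub].
      * destruct (hne C hSC) as [x hx].
        apply (hCA1 x). split; [exact hx | apply hDA, hsub, hx].
      * apply hCA2. intro x. unfold compl. split.
        -- intros hx hAx. apply (hCA1 x); tauto.
        -- intros hnA. apply NNPP. intro hnC. apply hnA, hDA, hsub. exact hnC.
    + destruct (hOrth D A hD hA hDA) as [hDA1 hDA2].
      destruct hdom as [hsub | hsub].
      * exists D. split; [exact hD|].
        destruct (classic (seteq C D)) as [e | ne]; [exact e|].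
        exfalso. apply hmax. exists D. split; [exact (hBS D hD)|].
        split; [split; assumption|]. split; assumption.
      * exfalso. destruct (hne A (hBS A hA)) as [x hx].
        destruct (classic (C x)) as [hc | hc].
        -- apply (hCA1 x); tauto.
        -- apply (hDA1 x). split; [apply hsub; exact hc | exact hx].
Qed.
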